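(* Let $\sigma$ be a completely erasing $k$-block substitution with $w_\epsilon\ne1^k$ that satisfies the optimality condition. Then $f_\sigma$ is Li-Yorke chaotic. That is, there exists an uncountable set $S\subset\mathbb I$ such that for all distinct $x,y\in S$, $$\liminf_{n\to\infty}|f_\sigma^n(x)-f_\sigma^n(y)|=0\quad\text{and}\quad\limsup_{n\to\infty}|f_\sigma^n(x)-f_\sigma^n(y)|>0.$$
   Context: Notation: $\mathbb I=[0,1]$. $\{0,1\}^*$ and $\{0,1\}^\omega$ denote finite and infinite binary words, and $\epsilon$ is the empty word. For a word $w$, set $0.w=\sum_iw_i2^{-i}$. For $x\in(0,1]$, $\widetilde x$ is the unique infinite binary expansion of $x$ not ending in $0^\infty$. Fix $k\ge2$. An erasing $k$-block substitution is a map $\sigma:\{0,1\}^k\to\{0,1\}^*$ with exactly one block $w_\epsilon$ such that $\sigma(w_\epsilon)=\epsilon$. $\sigma$ is alternating if there are $\sigma_1,\dots,\sigma_k:\{0,1\}\to\{0,1\}^*$ with $\sigma(b_1\cdots b_k)=\sigma_1(b_1)\cdots\sigma_k(b_k)$. It is then extended to all finite or infinite words by $\sigma(u)=\prod_j\sigma_{((j-1)\bmod k)+1}(u_j)$. $\sigma$ is completely erasing if it is erasing and alternating, and every $w\in\{0,1\}^*$ satisfies $\sigma^n(w)=\epsilon$ for some $n\in\mathbb N$. The map $f_\sigma:\mathbb I\to\mathbb I$ is defined by $f_\sigma(x)=0.\sigma(\widetilde x)$ if $x\in(0,1]$ and $\widetilde x\neq w_\epsilon^\infty$, and $f_\sigma(x)=0$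 otherwise. Optimality condition: every $w\in\{0,1\}^\omega$ can be written as $w=\prod_{i\ge1}\sigma(b_i)$ with blocks $b_i\in\{0,1\}^k$ satisfying $\sigma(b_i)\ne\epsilon$. *)

(* Defs.v *)
(* Stdlib reals + Coquelicot, lists for finite words,
   nat -> bool for infinite words (0-indexed: w 0 is the first letter). *)
From Stdlib Require Import Reals List ClassicalEpsilon.
From Coquelicot Require Import Coquelicot.
Import ListNotations.
Open Scope R_scope.

Definition bin_val (w : nat -> bool) : R :=
  Series (fun i => if w i then (/ 2) ^ (S i) else 0).

(** The result may be
    finite (if almost all u_j are empty); positions beyond its end are filled
    with 0 (false), which does not change the binary value 0.(...). *)
Definition prefix_cat (u : nat -> list bool) (j : nat) : list bool :=
  concat (map u (seq 0 j)).

Definition concat_inf (u : nat -> list bool) : nat -> bool :=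
  fun p => if excluded_middle_informative
                (exists j, (p < length (prefix_cat u j))%nat /\
                           nth p (prefix_cat u j) false = true)
           then true else false.

(** x~ : the unique infinite binary expansion of x in (0,1] not ending in 0^oo
    (chosen by Hilbert's epsilon; meaningful for x in (0,1]). *)
Definition is_tilde (x : R) (w : nat -> bool) : Prop :=
  bin_val w = x /\ (forall n, exists m, (n <= m)%nat /\ w m = true).

Definition tilde (x : R) : nat -> bool :=
  epsilon (inhabits (fun _ => false)) (is_tilde x).

(** An alternating k-block substitution is given by its components
    sigma_1, ..., sigma_k, here s 0, ..., s (k-1) : bool -> list bool. *)

Definition sigma_block (k : nat) (s : nat -> bool -> list bool) (b : list bool)
  : list bool :=
  concat (map (fun i => s i (nth i b false)) (seq 0 k)).

Definition sigma_word (k : nat) (s : nat -> bool -> list bool) (u : list bool)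
  : list bool :=
  concat (map (fun j => s (j mod k)%nat (nth j u false)) (seq 0 (length u))).

Definition sigma_inf (k : nat) (s : nat -> bool -> list bool) (w : nat -> bool)
  : nat -> bool :=
  concat_inf (fun j => s (j mod k)%nat (w j)).

Definition erasing_block (k : nat) (s : nat -> bool -> list bool)
  (weps : list bool) : Prop :=
  length weps = k /\ sigma_block k s weps = [] /\
  (forall b, length b = k -> sigma_block k s b = [] -> b = weps).

Definition erasing (k : nat) (s : nat -> bool -> list bool) : Prop :=
  exists weps, erasing_block k s weps.

(** Completely erasing (alternating is built into the representation). *)
Definition completely_erasing (k : nat) (s : nat -> bool -> list bool) : Prop :=
  erasing k s /\
  forall u : list bool, exists n : nat, Nat.iter n (sigma_word k s) u = [].

Definition optimal (k : nat) (s : nat -> bool -> list bool) : Prop :=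
  forall w : nat -> bool,
    exists b : nat -> list bool,
      (forall i, length (b i) = k /\ sigma_block k s (b i) <> []) /\
      w = concat_inf (fun i => sigma_block k s (b i)).

Definition per (k : nat) (weps : list bool) : nat -> bool :=
  fun j => nth (j mod k)%nat weps false.

Definition f_sigma (k : nat) (s : nat -> bool -> list bool) (weps : list bool)
  (x : R) : R :=
  if excluded_middle_informative (0 < x <= 1 /\ tilde x <> per k weps)
  then bin_val (sigma_inf k s (tilde x))
  else 0.

Definition uncountable (S : R -> Prop) : Prop :=
  ~ exists f : nat -> R, forall x, S x -> exists n, f n = x.

(* Main.v *)
Require Import Defs.
From Stdlib Require Import Reals List ClassicalEpsilon Lia Arith FunctionalExtensionality Lra Cantor.
From Coquelicot Require Import Coquelicot.
Import ListNotations.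
Local Open Scope nat_scope.
Lemma nth_map_seq {A} (f : nat -> A) n i d : i < n -> nth i (map f (seq 0 n)) d = f i.
Proof.
  intros H. rewrite nth_indep with (d' := f 0) by (rewrite length_map, length_seq; lia).
  rewrite map_nth, seq_nth by lia. reflexivity.
Qed.

Lemma concat_nil_in {A} (l : list (list A)) x : concat l = [] -> In x l -> x = [].
Proof.
  induction l; simpl; intros H Hi; [contradiction|].
  apply app_eq_nil in H as [H1 H2]. destruct Hi; subst; auto.
Qed.

Lemma prefix_cat_S u j : prefix_cat u (S j) = prefix_cat u j ++ u j.
Proof. unfold prefix_cat. rewrite seq_S, map_app, concat_app. simpl. now rewrite app_nil_r. Qed.

Lemma prefix_cat_0 u : prefix_cat u 0 = [].
Proof. reflexivity. Qed.

Lemma prefix_cat_mono u j j' : j <= j' -> exists r, prefix_cat u j' = prefix_cat u j ++ r.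
Proof.
  induction 1. exists []. now rewrite app_nil_r.
  destruct IHle as [r Hr]. exists (r ++ u m). rewrite prefix_cat_S, Hr, app_assoc. reflexivity.
Qed.

Lemma prefix_cat_ext u u' j : (forall i, i < j -> u i = u' i) -> prefix_cat u j = prefix_cat u' j.
Proof.
  induction j; intros H; [reflexivity|].
  rewrite !prefix_cat_S, (H j) by lia. rewrite IHj; auto.
Qed.

Lemma prefix_nth_agree u j j' p : p < length (prefix_cat u j) -> p < length (prefix_cat u j') ->
  nth p (prefix_cat u j) false = nth p (prefix_cat u j') false.
Proof.
  intros H1 H2. destruct (le_ge_dec j j') as [h|h].
  - destruct (prefix_cat_mono u j j' h) as [r Hr]. rewrite Hr, app_nth1; auto.
  - destruct (prefix_cat_mono u j' j h) as [r Hr]. rewrite Hr, app_nth1; auto.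
Qed.

Lemma concat_inf_prefix u j p : p < length (prefix_cat u j) ->
  concat_inf u p = nth p (prefix_cat u j) false.
Proof.
  intros H. unfold concat_inf.
  destruct excluded_middle_informative as [[j' [H1 H2]]|n].
  - rewrite <- H2. apply prefix_nth_agree; auto.
  - destruct (nth p (prefix_cat u j) false) eqn:E; auto.
    exfalso; apply n; eauto.
Qed.

Lemma concat_inf_regroup u v (g : nat -> nat) :
  (forall j, prefix_cat v j = prefix_cat u (g j)) ->
  (forall N, exists j, N <= g j) -> concat_inf v = concat_inf u.
Proof.
  intros Hg Hunb. apply functional_extensionality. intros p. unfold concat_inf.
  destruct excluded_middle_informative as [[j [H1 H2]]|n1];
  destruct excluded_middle_informative as [[j' [H1' H2']]|n2]; auto.
  - exfalso. apply n2. exists (g j). rewrite <- Hg. auto.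
  - exfalso. apply n1. destruct (Hunb j') as [j0 Hj0].
    destruct (prefix_cat_mono u j' (g j0) Hj0) as [r Hr].
    exists j0. rewrite Hg, Hr. rewrite length_app. split; [lia|].
    rewrite app_nth1; auto.
Qed.

Lemma prefix_len_unbounded u : (forall N, exists j, N <= j /\ u j <> []) ->
  forall N, exists j, N <= length (prefix_cat u j).
Proof.
  intros H N. induction N. exists 0; lia.
  destruct IHN as [j Hj]. destruct (H j) as [j' [Hj' Hne]].
  exists (S j'). rewrite prefix_cat_S, length_app.
  destruct (prefix_cat_mono u j j' Hj') as [r Hr]. rewrite Hr, length_app.
  destruct (u j'); [congruence|]. simpl. lia.
Qed.

Local Open Scope R_scope.
Definition ga (i : nat) : R := (/ 2) ^ (S i).
Definition aw (w : nat -> bool) (i : nat) : R := if w i then ga i else 0.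

Lemma ga_pos i : 0 < ga i.
Proof. unfold ga. apply pow_lt. lra. Qed.

Lemma is_series_ga : is_series ga 1.
Proof.
  assert (H : is_series (fun n => (/2) ^ n) (/ (1 - /2))).
  { apply is_series_geom. rewrite Rabs_pos_eq; lra. }
  apply (is_series_scal_l (/2)) in H.
  replace 1 with (scal (/2) (/ (1 - /2))).
  - eapply is_series_ext; [|exact H]. intros n. unfold ga. simpl. reflexivity.
  - unfold scal; simpl; unfold mult; simpl. field.
Qed.

Lemma ex_series_ga : ex_series ga.
Proof. exists 1. apply is_series_ga. Qed.

Lemma Series_ga : Series ga = 1.
Proof. apply is_series_unique, is_series_ga. Qed.

Lemma aw_bound w i : 0 <= aw w i <= ga i.
Proof. unfold aw. pose proof (ga_pos i). destruct (w i); lra. Qed.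

Lemma ex_series_aw w : ex_series (aw w).
Proof.
  apply (ex_series_le (aw w) ga); [|apply ex_series_ga].
  intros n. unfold norm; simpl. unfold abs; simpl. pose proof (aw_bound w n).
  rewrite Rabs_pos_eq; lra.
Qed.

Lemma bin_val_aw w : bin_val w = Series (aw w).
Proof. reflexivity. Qed.

Lemma Series_zero_fun : Series (fun _ => 0) = 0.
Proof.
  rewrite <- (Series_ext (fun n => 0 * ga n)) by (intros; ring).
  rewrite Series_scal_l. ring.
Qed.

Lemma bin_val_bounds w : 0 <= bin_val w <= 1.
Proof.
  rewrite bin_val_aw. split.
  - rewrite <- Series_zero_fun. apply Series_le. intros n; pose proof (aw_bound w n); lra.
    apply ex_series_aw.
  - rewrite <- Series_ga. apply Series_le. apply aw_bound. apply ex_series_ga.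
Qed.

Lemma bin_val_split w m : bin_val w = sum_f_R0 (aw w) m + (/2) ^ (S m) * bin_val (fun i => w (S m + i)%nat).
Proof.
  rewrite !bin_val_aw. rewrite (Series_incr_n (aw w) (S m)) by (lia || apply ex_series_aw).
  simpl pred. f_equal. rewrite <- Series_scal_l. apply Series_ext. intros n.
  unfold aw, ga. destruct (w (S m + n)%nat); [|ring].
  rewrite <- pow_add. f_equal. lia.
Qed.

Lemma bin_val_pos w p : w p = true -> 0 < bin_val w.
Proof.
  intros Hp. rewrite (bin_val_split w p).
  pose proof (bin_val_bounds (fun i => w (S p + i)%nat)).
  assert (0 <= (/2) ^ (S p)) by (apply pow_le; lra).
  assert (0 < sum_f_R0 (aw w) p).
  { destruct p. simpl. unfold aw. rewrite Hp. apply ga_pos.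
    simpl. assert (0 <= sum_f_R0 (aw w) p) by (apply cond_pos_sum; intros; apply aw_bound).
    unfold aw at 2. rewrite Hp. pose proof (ga_pos (S p)). lra. }
  assert (0 <= (/2) ^ (S p) * bin_val (fun i => w (S p + i)%nat)) by (apply Rmult_le_pos; lra).
  lra.
Qed.

Lemma sum_zero w m : (forall i, (i <= m)%nat -> w i = false) -> sum_f_R0 (aw w) m = 0.
Proof.
  intros H. rewrite (sum_eq _ (fun _ => 0)).
  - clear H. induction m; simpl; [reflexivity|]. rewrite IHm. ring.
  - intros i Hi. unfold aw. rewrite H; auto.
Qed.

Lemma bin_val_small w m : (forall i, (i < m)%nat -> w i = false) -> bin_val w <= (/2) ^ m.
Proof.
  intros H. destruct m.
  - simpl. apply bin_val_bounds.
  - rewrite (bin_val_split w m), sum_zero by (intros; apply H; lia).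
    pose proof (bin_val_bounds (fun i => w (S m + i)%nat)).
    assert (0 <= (/2) ^ (S m)) by (apply pow_le; lra). nra.
Qed.

Lemma bin_val_big w : w 0%nat = true -> w 1%nat = true -> 3/4 <= bin_val w.
Proof.
  intros H0 H1. rewrite (bin_val_split w 1). simpl. unfold aw. rewrite H0, H1. unfold ga. simpl.
  pose proof (bin_val_bounds (fun i => w (S (S i)))). nra.
Qed.

Lemma exists_min (P : nat -> Prop) : (exists n, P n) -> exists n, P n /\ forall i, (i < n)%nat -> ~ P i.
Proof.
  intros [n Hn]. revert Hn. induction n as [n IH] using (well_founded_induction lt_wf). intros Hn.
  destruct (classic (exists i, (i < n)%nat /\ P i)) as [[i [Hi Pi]]|Hno].
  - apply (IH i Hi Pi).
  - exists n. split; auto. intros i Hi Pi. apply Hno; eauto.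
Qed.

Definition inf_true (w : nat -> bool) := forall N, exists p, (N <= p)%nat /\ w p = true.

Lemma bin_val_lt w w' m : (forall i, (i < m)%nat -> w i = w' i) -> w m = true -> w' m = false ->
  inf_true w -> bin_val w' < bin_val w.
Proof.
  intros Heq Hm Hm' Hinf. rewrite (bin_val_split w m), (bin_val_split w' m).
  assert (Hs : sum_f_R0 (aw w) m = sum_f_R0 (aw w') m + ga m).
  { destruct m. simpl. unfold aw. rewrite Hm, Hm'. ring.
    simpl. rewrite (sum_eq (aw w) (aw w')).
    replace (aw w (S m)) with (ga (S m)) by (unfold aw; rewrite Hm; auto).
    replace (aw w' (S m)) with 0 by (unfold aw; rewrite Hm'; auto). ring.
    intros i Hi. unfold aw. rewrite Heq by lia. reflexivity. }
  rewrite Hs. destruct (Hinf (S m)) as [p [Hp Hwp]].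
  assert (0 < bin_val (fun i => w (S m + i)%nat)).
  { apply (bin_val_pos _ (p - S m)). replace (S m + (p - S m))%nat with p by lia. auto. }
  pose proof (bin_val_bounds (fun i => w' (S m + i)%nat)).
  assert (0 < (/2) ^ (S m)) by (apply pow_lt; lra).
  unfold ga. nra.
Qed.

Lemma bin_val_inj w w' : inf_true w -> inf_true w' -> bin_val w = bin_val w' -> w = w'.
Proof.
  intros Hw Hw' E. apply functional_extensionality. intros i.
  destruct (classic (exists n, w n <> w' n)) as [Hex|Hno].
  - exfalso. destruct (exists_min _ Hex) as [m [Hm Hmin]].
    assert (Hb : forall i, (i < m)%nat -> w i = w' i).
    { intros j Hj. destruct (Bool.bool_dec (w j) (w' j)); auto. exfalso; eapply Hmin; eauto. }
    destruct (w m) eqn:E1; destruct (w' m) eqn:E2; try congruence.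
    + pose proof (bin_val_lt w w' m Hb E1 E2 Hw). lra.
    + assert (Hb' : forall i, (i < m)%nat -> w' i = w i) by (intros; symmetry; auto).
      pose proof (bin_val_lt w' w m Hb' E2 E1 Hw'). lra.
  - destruct (Bool.bool_dec (w i) (w' i)); auto. exfalso; apply Hno; eauto.
Qed.

Lemma tilde_bin_val w : inf_true w -> tilde (bin_val w) = w.
Proof.
  intros Hw. unfold tilde.
  assert (Hex : exists w0, is_tilde (bin_val w) w0).
  { exists w. split; [reflexivity| exact Hw]. }
  pose proof (epsilon_spec (inhabits (fun _ : nat => false)) (is_tilde (bin_val w)) Hex) as [E Hinf].
  apply bin_val_inj; auto.
Qed.

Local Open Scope nat_scope.
Lemma map_seq_shift {A} (f : nat -> A) a n : map f (seq a n) = map (fun j => f (a + j)) (seq 0 n).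
Proof.
  revert a f; induction n; intros a f; [reflexivity|].
  simpl. rewrite Nat.add_0_r. f_equal. rewrite (IHn (S a) f), (IHn 1 (fun j => f (a + j))).
  apply map_ext. intros; f_equal; lia.
Qed.

Lemma concat_map_nil {A B} (f : A -> list B) l : (forall x, In x l -> f x = []) -> concat (map f l) = [].
Proof. induction l; simpl; intros H; auto. rewrite H, IHl; auto. Qed.

Section Words.
Local Open Scope nat_scope.
Variable k : nat.
Variable s : nat -> bool -> list bool.
Variable weps : list bool.
Hypothesis Hk : 2 <= k.
Hypothesis Hwl : length weps = k.
Hypothesis Hwe : sigma_block k s weps = [].

Lemma k_nz : k <> 0. Proof. lia. Qed.

Definition sw (o : nat) (u : list bool) : list bool :=
  concat (map (fun j => s ((o + j) mod k) (nth j u false)) (seq 0 (length u))).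

Lemma sw_nil o : sw o [] = [].
Proof. reflexivity. Qed.

Lemma sigma_word_sw u : sigma_word k s u = sw 0 u.
Proof. reflexivity. Qed.

Lemma sw_app o u v : sw o (u ++ v) = sw o u ++ sw (o + length u) v.
Proof.
  unfold sw. rewrite length_app, seq_app, map_app, concat_app. f_equal.
  - f_equal. apply map_ext_in. intros j Hj. apply in_seq in Hj. rewrite app_nth1 by lia. reflexivity.
  - f_equal. rewrite map_seq_shift. apply map_ext. intros j. simpl.
    rewrite app_nth2 by lia. f_equal. f_equal. lia. f_equal. lia.
Qed.

Lemma sw_mod o u : sw o u = sw (o mod k) u.
Proof.
  unfold sw. f_equal. apply map_ext. intros j. rewrite Nat.Div0.add_mod_idemp_l. reflexivity.
Qed.

Lemma erase_comp r : r < k -> s r (nth r weps false) = [].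
Proof.
  intros Hr. unfold sigma_block in Hwe. eapply concat_nil_in; [exact Hwe|].
  apply in_map_iff. exists r. split; auto. apply in_seq. lia.
Qed.

Lemma sw_block b : length b = k -> sw 0 b = sigma_block k s b.
Proof.
  intros Hb. unfold sw, sigma_block. rewrite Hb. f_equal. apply map_ext_in. intros j Hj.
  apply in_seq in Hj. simpl. rewrite Nat.mod_small by lia. reflexivity.
Qed.

Lemma sw0_app_aligned x y : length x mod k = 0 -> sw 0 (x ++ y) = sw 0 x ++ sw 0 y.
Proof. intros H. rewrite sw_app, (sw_mod (0 + length x) y). simpl. rewrite H. reflexivity. Qed.

Definition per_seg (o n : nat) : list bool :=
  map (fun t => nth ((o + t) mod k) weps false) (seq 0 n).

Lemma length_per_seg o n : length (per_seg o n) = n.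
Proof. unfold per_seg. now rewrite length_map, length_seq. Qed.

Lemma sw_per_seg o n : sw o (per_seg o n) = [].
Proof.
  unfold sw. rewrite length_per_seg. apply concat_map_nil. intros j Hj. apply in_seq in Hj.
  unfold per_seg. rewrite nth_map_seq by lia. apply erase_comp. apply Nat.mod_upper_bound. lia.
Qed.

Definition pad (o : nat) := per_seg o (k - o mod k).

Lemma pad_aligned o : (o + length (pad o)) mod k = 0.
Proof.
  unfold pad. rewrite length_per_seg.
  pose proof (Nat.Div0.div_mod o k). pose proof (Nat.mod_upper_bound o k k_nz).
  replace (o + (k - o mod k)) with ((o / k + 1) * k) by nia.
  apply Nat.Div0.mod_mul.
Qed.

Definition word (Bs : list (list bool)) : list bool := concat (map (sigma_block k s) Bs).

Lemma word_app a b : word (a ++ b) = word a ++ word b.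
Proof. unfold word. now rewrite map_app, concat_app. Qed.

Definition Pre (o : nat) (Bs : list (list bool)) : list bool :=
  pad o ++ concat (map (fun b => b ++ weps) Bs).

Lemma sw_blocks Bs : (forall b, In b Bs -> length b = k) ->
  sw 0 (concat (map (fun b => b ++ weps) Bs)) = word Bs.
Proof.
  induction Bs as [|b Bs IH]; intros H; [reflexivity|].
  assert (Hb : length b = k) by (apply H; left; auto).
  simpl. rewrite sw0_app_aligned.
  - rewrite sw0_app_aligned by (rewrite Hb; apply Nat.Div0.mod_same).
    rewrite (sw_block b), (sw_block weps), Hwe, IH by (auto; intros; apply H; right; auto).
    unfold word; simpl. now rewrite app_nil_r.
  - rewrite length_app, Hb, Hwl. replace (k + k) with (2 * k) by lia.
    apply Nat.Div0.mod_mul.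
Qed.

Lemma sw_Pre o Bs : (forall b, In b Bs -> length b = k) -> sw o (Pre o Bs) = word Bs.
Proof.
  intros H. unfold Pre. rewrite sw_app. unfold pad at 1. rewrite sw_per_seg. simpl.
  rewrite sw_mod, pad_aligned. apply sw_blocks; auto.
Qed.

Lemma sigma_concat (u : nat -> list bool) :
  (forall N, exists j, N <= length (prefix_cat u j)) ->
  sigma_inf k s (concat_inf u) = concat_inf (fun j => sw (length (prefix_cat u j)) (u j)).
Proof.
  intros Hunb. unfold sigma_inf. symmetry.
  apply concat_inf_regroup with (g := fun j => length (prefix_cat u j)); auto.
  intros j. transitivity (sw 0 (prefix_cat u j)).
  - induction j; [reflexivity|]. rewrite !prefix_cat_S, IHj, sw_app. reflexivity.
  - unfold sw. unfold prefix_cat at 3. f_equal. symmetry. apply map_ext_in. intros p Hp. apply in_seq in Hp.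
    simpl. f_equal. apply concat_inf_prefix. lia.
Qed.
Hypothesis Hopt : optimal k s.

Definition Vl (Bs : list (list bool)) : Prop :=
  forall b, In b Bs -> length b = k /\ sigma_block k s b <> [].

Lemma prefix_len_ge (u : nat -> list bool) M : (forall i, u i <> []) -> M <= length (prefix_cat u M).
Proof.
  intros H. induction M; [simpl; lia|]. rewrite prefix_cat_S, length_app.
  specialize (H M). destruct (u M); [congruence|]. simpl; lia.
Qed.

Lemma Ext o V : exists Bs n, Vl Bs /\ word Bs = V ++ per_seg (o + length V) n.
Proof.
  set (w := fun p => if p <? length V then nth p V false else nth ((o + p) mod k) weps false).
  destruct (Hopt w) as [b [Hb Hw]].
  set (u := fun i => sigma_block k s (b i)).
  set (M := length V).
  exists (map b (seq 0 M)).
  assert (HX : word (map b (seq 0 M)) = prefix_cat u M).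
  { unfold word, prefix_cat. now rewrite map_map. }
  assert (HL : M <= length (prefix_cat u M)).
  { apply prefix_len_ge. intros i. apply Hb. }
  exists (length (prefix_cat u M) - M). split.
  - intros x Hx. apply in_map_iff in Hx as [i [<- _]]. apply Hb.
  - rewrite HX. apply nth_ext with (d := false) (d' := false).
    + rewrite length_app, length_per_seg. fold M. lia.
    + intros p Hp. rewrite <- concat_inf_prefix by exact Hp. fold u in Hw. rewrite <- Hw.
      unfold w. destruct (p <? length V) eqn:E.
      * apply Nat.ltb_lt in E. rewrite app_nth1; auto.
      * apply Nat.ltb_ge in E. rewrite app_nth2 by auto. unfold per_seg.
        rewrite nth_map_seq by (fold M in E |- *; lia). f_equal. f_equal. lia.
Qed.

Lemma const_block (c : bool) : exists B, length B = k /\ sigma_block k s B <> [] /\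
  forall x, In x (sigma_block k s B) -> x = c.
Proof.
  destruct (Hopt (fun _ => c)) as [b [Hb Hw]].
  exists (b 0). destruct (Hb 0) as [H1 H2]. split; [auto|split; [auto|]].
  intros x Hx. apply In_nth with (d := false) in Hx as [p [Hp Hn]].
  rewrite <- Hn. 
  assert (E : prefix_cat (fun i => sigma_block k s (b i)) 1 = sigma_block k s (b 0)) by (unfold prefix_cat; simpl; apply app_nil_r).
  rewrite <- E. rewrite <- concat_inf_prefix by (rewrite E; auto). rewrite <- Hw. reflexivity.
Qed.

Definition ExtBs (o : nat) (V : list bool) : list (list bool) :=
  proj1_sig (constructive_indefinite_description _ (Ext o V)).

Lemma ExtBs_spec o V : exists n, Vl (ExtBs o V) /\ word (ExtBs o V) = V ++ per_seg (o + length V) n.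
Proof.
  unfold ExtBs. destruct constructive_indefinite_description as [Bs [n H]]. simpl. eauto.
Qed.

Fixpoint BackD (c : nat -> nat) (T : nat) (Q : list (list bool)) (d : nat) : list (list bool) :=
  match d with
  | 0 => Q
  | S d' => ExtBs (c (T - S d')) (Pre (c (T - S d')) (BackD c T Q d'))
  end.

Definition Stage c T Q m := BackD c T Q (T - m).

Lemma Stage_top c T Q : Stage c T Q T = Q.
Proof. unfold Stage. now rewrite Nat.sub_diag. Qed.

Lemma Stage_step c T Q m : m < T -> Stage c T Q m = ExtBs (c m) (Pre (c m) (Stage c T Q (S m))).
Proof.
  intros H. unfold Stage. replace (T - m) with (S (T - S m)) by lia. simpl.
  replace (T - S (T - S m)) with m by lia. reflexivity.
Qed.

Lemma BackD_valid c T Q : Vl Q -> forall d, Vl (BackD c T Q d).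
Proof.
  intros HQ d. induction d; simpl; auto.
  destruct (ExtBs_spec (c (T - S d)) (Pre (c (T - S d)) (BackD c T Q d))) as [n [H _]]. auto.
Qed.

Lemma Stage_valid c T Q m : Vl Q -> Vl (Stage c T Q m).
Proof. intros; apply BackD_valid; auto. Qed.

Lemma Stage_sw c T Q m : Vl Q -> m < T ->
  sw (c m) (word (Stage c T Q m)) = word (Stage c T Q (S m)).
Proof.
  intros HQ Hm. rewrite (Stage_step c T Q m Hm).
  destruct (ExtBs_spec (c m) (Pre (c m) (Stage c T Q (S m)))) as [n [_ H]].
  rewrite H, sw_app, sw_per_seg, app_nil_r by auto.
  apply sw_Pre; auto. intros b Hb. apply (Stage_valid c T Q (S m) HQ b Hb).
Qed.

Lemma all_false_eq (l1 l2 : list bool) : length l1 = length l2 -> ~ In true l1 -> ~ In true l2 -> l1 = l2.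
Proof.
  intros H H1 H2. apply nth_ext with (d := false) (d' := false); auto.
  intros n Hn. destruct (nth n l1 false) eqn:E1.
  - exfalso; apply H1. rewrite <- E1. apply nth_In; auto.
  - destruct (nth n l2 false) eqn:E2; auto. exfalso; apply H2. rewrite <- E2. apply nth_In; lia.
Qed.

Lemma Pre_has1 o Bs : Vl Bs -> Bs <> [] -> In true (Pre o Bs).
Proof.
  intros HV Hne. destruct Bs as [|b Bs]; [congruence|].
  unfold Pre. apply in_or_app. right. simpl. apply in_or_app. left.
  destruct (HV b (or_introl eq_refl)) as [Hb1 Hb2].
  destruct (in_dec Bool.bool_dec true weps) as [Hw|Hw].
  - apply in_or_app; right; auto.
  - destruct (in_dec Bool.bool_dec true b) as [Hb|Hb].
    + apply in_or_app; left; auto.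
    + exfalso. apply Hb2. rewrite (all_false_eq b weps); auto. lia.
Qed.

Lemma word_nil : word [] = []. Proof. reflexivity. Qed.

Lemma BackD_ne c T Q : Vl Q -> Q <> [] -> forall d, BackD c T Q d <> [].
Proof.
  intros HQ HQn d. induction d; simpl; auto.
  destruct (ExtBs_spec (c (T - S d)) (Pre (c (T - S d)) (BackD c T Q d))) as [n [_ H]].
  intros E. rewrite E, word_nil in H.
  pose proof (Pre_has1 (c (T - S d)) (BackD c T Q d) (BackD_valid c T Q HQ d) IHd) as H1.
  destruct (Pre (c (T - S d)) (BackD c T Q d)); [contradiction|discriminate].
Qed.

Lemma Stage_has1 c T Q m : Vl Q -> Q <> [] -> m < T -> In true (word (Stage c T Q m)).
Proof.
  intros HQ HQn Hm. rewrite (Stage_step c T Q m Hm).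
  destruct (ExtBs_spec (c m) (Pre (c m) (Stage c T Q (S m)))) as [n [_ H]].
  rewrite H. apply in_or_app. left. apply Pre_has1.
  apply Stage_valid; auto. apply BackD_ne; auto.
Qed.


Hypothesis Hce : completely_erasing k s.

Definition step (u : nat -> list bool) : nat -> list bool :=
  fun j => sw (length (prefix_cat u j)) (u j).
Definition img u n := Nat.iter n step u.
Definition offs u j m := length (prefix_cat (img u m) j).

Lemma step_dep u u' j : (forall i, i <= j -> u i = u' i) -> forall i, i <= j -> step u i = step u' i.
Proof.
  intros H i Hi. unfold step. rewrite (prefix_cat_ext u u' i) by (intros; apply H; lia). rewrite H by lia. auto.
Qed.

Lemma img_dep u u' j : (forall i, i <= j -> u i = u' i) -> forall n i, i <= j -> img u n i = img u' n i.
Proof.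
  intros H n. induction n; intros i Hi; simpl; auto.
  apply (step_dep (img u n) (img u' n) j); auto.
Qed.

Lemma offs_dep u u' j m : (forall i, i < j -> u i = u' i) -> offs u j m = offs u' j m.
Proof.
  intros H. unfold offs. f_equal. apply prefix_cat_ext. intros i Hi.
  apply (img_dep u u' (j - 1)); [intros; apply H; lia | lia].
Qed.

Definition ZB := proj1_sig (constructive_indefinite_description _ (const_block false)).
Definition OB := proj1_sig (constructive_indefinite_description _ (const_block true)).

Lemma ZB_spec : length ZB = k /\ sigma_block k s ZB <> [] /\ forall x, In x (sigma_block k s ZB) -> x = false.
Proof. unfold ZB. destruct constructive_indefinite_description; auto. Qed.
Lemma OB_spec : length OB = k /\ sigma_block k s OB <> [] /\ forall x, In x (sigma_block k s OB) -> x = true.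
Proof. unfold OB. destruct constructive_indefinite_description; auto. Qed.

Definition Qs (b : bool) : list (list bool) := if b then [OB; OB] else [ZB; ZB; OB].
Definition Qa (m : nat) : list (list bool) := repeat ZB (S m) ++ [OB].
Definition Qtop_b (j : nat) (b : bool) := if Nat.even j then Qs b else Qa (Nat.div2 j).

Lemma Qtop_valid j b : Vl (Qtop_b j b).
Proof.
  destruct ZB_spec as [Z1 [Z2 _]]. destruct OB_spec as [O1 [O2 _]].
  intros x Hx. unfold Qtop_b, Qs, Qa in Hx.
  destruct (Nat.even j); [destruct b|]; simpl in Hx.
  - destruct Hx as [<-|[<-|[]]]; auto.
  - destruct Hx as [<-|[<-|[<-|[]]]]; auto.
  - destruct Hx as [<-|Hx]; auto. apply in_app_or in Hx as [Hx|[<-|[]]]; auto.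
    apply repeat_spec in Hx. subst; auto.
Qed.

Lemma Qtop_ne j b : Qtop_b j b <> [].
Proof. unfold Qtop_b, Qs, Qa. destruct (Nat.even j); [destruct b|]; simpl; discriminate. Qed.

Lemma word_cons b Bs : word (b :: Bs) = sigma_block k s b ++ word Bs.
Proof. reflexivity. Qed.

Lemma Qtop_has1 j b : In true (word (Qtop_b j b)).
Proof.
  destruct OB_spec as [O1 [O2 O3]].
  assert (HO : In true (sigma_block k s OB)).
  { destruct (sigma_block k s OB) as [|x l] eqn:E; [congruence|].
    rewrite (O3 x) by (left; auto). left; auto. }
  unfold Qtop_b, Qs, Qa. destruct (Nat.even j); [destruct b|].
  - rewrite word_cons. apply in_or_app; auto.
  - rewrite !word_cons. apply in_or_app; right. apply in_or_app; right. apply in_or_app; auto.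
  - rewrite word_app, word_cons. apply in_or_app; right. apply in_or_app; auto.
Qed.

Lemma Hce2 u : exists n, Nat.iter n (sigma_word k s) u = [].
Proof. destruct Hce as [_ H]. apply H. Qed.

Definition ers u := proj1_sig (constructive_indefinite_description _ (Hce2 u)).

Lemma ers_spec u d : ers u <= d -> Nat.iter d (sigma_word k s) u = [].
Proof.
  intros H. unfold ers in H. destruct constructive_indefinite_description as [n Hn]. simpl in H.
  replace d with ((d - n) + n) by lia. rewrite Nat.iter_add, Hn.
  clear. induction (d - n); simpl; auto. rewrite IHn0. reflexivity.
Qed.

Definition Eb j := Nat.max (ers (word (Qtop_b j false))) (ers (word (Qtop_b j true))).

Lemma ers_Eb j b : ers (word (Qtop_b j b)) <= Eb j.
Proof. unfold Eb. destruct b; lia. Qed.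

Fixpoint T (j : nat) : nat := match j with 0 => 0 | S j' => T j' + Eb j' + 1 end.

Lemma T_mono i j : i <= j -> T i <= T j.
Proof. induction 1; simpl; lia. Qed.

Lemma T_gap i j : i < j -> T i + Eb i < T j.
Proof. intros H. pose proof (T_mono (S i) j H). simpl in H0. lia. Qed.

Lemma T_ge j : j <= T j.
Proof. induction j; simpl; lia. Qed.

Definition nu (m : nat) : nat := fst (Cantor.of_nat m).

Lemma nu_inf i N : exists m, N <= m /\ nu m = i.
Proof.
  exists (Cantor.to_nat (i, N)). split.
  - pose proof (Cantor.to_nat_non_decreasing i N). lia.
  - unfold nu. rewrite Cantor.cancel_of_to. reflexivity.
Qed.

Section Gamma.
Variable g : nat -> bool.

Definition Qg j := Qtop_b j (g (nu (Nat.div2 j))).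

Definition Chain j (c : nat -> nat) : list bool := word (Stage c (T j) (Qg j) 0).

Fixpoint pl (j : nat) : nat -> list bool :=
  match j with
  | 0 => fun _ => []
  | S j' => fun i => if i =? j' then Chain j' (offs (pl j') j') else pl j' i
  end.

Definition piece j := pl (S j) j.

Lemma pl_piece j : forall i, i < j -> pl j i = piece i.
Proof.
  induction j; intros i Hi; [lia|]. simpl.
  destruct (Nat.eqb_spec i j).
  - subst. unfold piece. simpl. now rewrite Nat.eqb_refl.
  - apply IHj. lia.
Qed.

Lemma piece_eq j : piece j = Chain j (offs piece j).
Proof.
  unfold piece at 1. simpl. rewrite Nat.eqb_refl. f_equal.
  apply functional_extensionality. intros m. apply offs_dep. intros i Hi. apply pl_piece; auto.
Qed.

Definition I n := img piece n.

Lemma I_S n j : I (S n) j = sw (offs piece j n) (I n j).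
Proof. reflexivity. Qed.

Lemma evol_chain j m : m <= T j -> I m j = word (Stage (offs piece j) (T j) (Qg j) m).
Proof.
  induction m; intros Hm.
  - unfold I, img. simpl. rewrite piece_eq. reflexivity.
  - rewrite I_S, IHm by lia. apply Stage_sw. apply Qtop_valid. lia.
Qed.

Lemma I_top j : I (T j) j = word (Qg j).
Proof. rewrite evol_chain by lia. now rewrite Stage_top. Qed.

Lemma prefix_cat_nil u j : (forall i, i < j -> u i = []) -> prefix_cat u j = [].
Proof.
  induction j; intros H; [reflexivity|]. rewrite prefix_cat_S, IHj, H; auto.
Qed.

Lemma erased j : forall m, T j + Eb j <= m -> I m j = [].
Proof.
  induction j as [j IH] using (well_founded_induction lt_wf).
  assert (H0 : forall m, T j <= m -> offs piece j m = 0).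
  { intros m Hm. unfold offs. fold (I m). rewrite prefix_cat_nil; auto.
    intros i Hi. apply IH; auto. pose proof (T_gap i j Hi). lia. }
  assert (H1 : forall d, I (T j + d) j = Nat.iter d (sigma_word k s) (word (Qg j))).
  { induction d. rewrite Nat.add_0_r. apply I_top.
    replace (T j + S d) with (S (T j + d)) by lia. rewrite I_S, IHd, H0 by lia. reflexivity. }
  intros m Hm. replace m with (T j + (m - T j)) by lia. rewrite H1. apply ers_spec.
  pose proof (ers_Eb j (g (nu (Nat.div2 j)))). unfold Qg. lia.
Qed.

Lemma I_has1 n j : n <= T j -> In true (I n j).
Proof.
  intros H. destruct (Nat.eq_dec n (T j)) as [->|Hn].
  - rewrite I_top. apply Qtop_has1.
  - rewrite evol_chain by lia. apply Stage_has1. apply Qtop_valid. apply Qtop_ne. lia.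
Qed.

Lemma I_inf n : forall N, exists j, N <= j /\ In true (I n j).
Proof.
  intros N. exists (Nat.max N n). split; [lia|]. apply I_has1.
  pose proof (T_ge (Nat.max N n)). lia.
Qed.

Lemma concat_inf_trues u : (forall N, exists j, N <= j /\ In true (u j)) ->
  forall N, exists p, N <= p /\ concat_inf u p = true.
Proof.
  intros H N.
  assert (Hu : forall N, exists j, N <= length (prefix_cat u j)).
  { apply prefix_len_unbounded. intros M. destruct (H M) as [j [Hj Hi]]. exists j; split; auto.
    intros E; rewrite E in Hi; destruct Hi. }
  destruct (Hu N) as [j0 Hj0]. destruct (H j0) as [j [Hj Hi]].
  apply In_nth with (d := false) in Hi as [q [Hq Hnq]].
  exists (length (prefix_cat u j) + q). split.
  - destruct (prefix_cat_mono u j0 j Hj) as [r Hr]. rewrite Hr, length_app. lia.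
  - rewrite (concat_inf_prefix u (S j)) by (rewrite prefix_cat_S, length_app; lia).
    rewrite prefix_cat_S, app_nth2 by lia. now replace (length (prefix_cat u j) + q - length (prefix_cat u j)) with q by lia.
Qed.

Definition V := concat_inf piece.

Lemma iter_sigma n : Nat.iter n (sigma_inf k s) V = concat_inf (I n).
Proof.
  induction n; [reflexivity|]. simpl. rewrite IHn. rewrite sigma_concat. reflexivity.
  apply prefix_len_unbounded. intros N. destruct (I_inf n N) as [j [Hj Hi]]. exists j; split; auto.
  intros E; rewrite E in Hi; destruct Hi.
Qed.

Lemma good n : forall N, exists p, N <= p /\ Nat.iter n (sigma_inf k s) V p = true.
Proof. rewrite iter_sigma. apply concat_inf_trues. apply I_inf. Qed.

Lemma front j p : p < length (word (Qg j)) -> Nat.iter (T j) (sigma_inf k s) V p = nth p (word (Qg j)) false.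
Proof.
  intros Hp. rewrite iter_sigma.
  assert (E : prefix_cat (I (T j)) (S j) = word (Qg j)).
  { rewrite prefix_cat_S, I_top, prefix_cat_nil; auto.
    intros i Hi. apply erased. pose proof (T_gap i j Hi). lia. }
  rewrite (concat_inf_prefix _ (S j)) by (rewrite E; auto). now rewrite E.
Qed.

Lemma nth_allc (c : bool) x y p : (forall z, In z x -> z = c) -> p < length x -> nth p (x ++ y) false = c.
Proof. intros H Hp. rewrite app_nth1 by auto. apply H. apply nth_In; auto. Qed.

Lemma sep_prefix m :
  let w := Nat.iter (T (2 * m)) (sigma_inf k s) V in
  (g (nu m) = false -> w 0 = false /\ w 1 = false) /\ (g (nu m) = true -> w 0 = true /\ w 1 = true).
Proof.
  intros w. destruct ZB_spec as [Z1 [Z2 Z3]]. destruct OB_spec as [O1 [O2 O3]].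
  assert (HQ : Qg (2 * m) = Qs (g (nu m))).
  { unfold Qg, Qtop_b. rewrite Nat.even_even, Nat.div2_double. reflexivity. }
  assert (Lz : 1 <= length (sigma_block k s ZB)) by (destruct (sigma_block k s ZB); simpl; [congruence|lia]).
  assert (Lo : 1 <= length (sigma_block k s OB)) by (destruct (sigma_block k s OB); simpl; [congruence|lia]).
  assert (Hzz : forall p, p < 2 -> nth p (word (Qs false)) false = false).
  { intros p Hp. unfold Qs. rewrite !word_cons, app_assoc. apply nth_allc.
    intros z Hz; apply in_app_or in Hz as [Hz|Hz]; auto. rewrite length_app; lia. }
  assert (Hoo : forall p, p < 2 -> nth p (word (Qs true)) false = true).
  { intros p Hp. unfold Qs. rewrite !word_cons, app_assoc. apply nth_allc.
    intros z Hz; apply in_app_or in Hz as [Hz|Hz]; auto. rewrite length_app; lia. }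
  assert (Lzz : 2 <= length (word (Qs false))).
  { unfold Qs. rewrite !word_cons, !length_app. lia. }
  assert (Loo : 2 <= length (word (Qs true))).
  { unfold Qs. rewrite !word_cons, !length_app. lia. }
  split; intros Hb; unfold w; rewrite !front; rewrite ?HQ, ?Hb; try lia; auto.
Qed.

Lemma agr_prefix m p : p < S m -> Nat.iter (T (S (2 * m))) (sigma_inf k s) V p = false.
Proof.
  intros Hp. destruct ZB_spec as [Z1 [Z2 Z3]].
  assert (HQ : Qg (S (2 * m)) = Qa m).
  { unfold Qg, Qtop_b. replace (S (2 * m)) with (2 * m + 1) by lia. rewrite Nat.even_odd.
    replace (2 * m + 1) with (S (2 * m)) by lia. rewrite Nat.div2_succ_double. reflexivity. }
  assert (Lz : 1 <= length (sigma_block k s ZB)) by (destruct (sigma_block k s ZB); simpl; [congruence|lia]).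
  assert (Hr : forall n, n <= length (word (repeat ZB n)) /\ forall z, In z (word (repeat ZB n)) -> z = false).
  { induction n; simpl. split; [lia| intros z []]. rewrite word_cons, length_app. destruct IHn as [A B].
    split; [lia|]. intros z Hz. apply in_app_or in Hz as [Hz|Hz]; auto. }
  destruct (Hr (S m)) as [A B].
  rewrite front; rewrite HQ; unfold Qa; rewrite word_app.
  - apply nth_allc; auto; lia.
  - rewrite length_app; lia.
Qed.

End Gamma.

Lemma per_sigma : sigma_inf k s (per k weps) = fun _ => false.
Proof.
  apply functional_extensionality. intros p. unfold sigma_inf, concat_inf.
  destruct excluded_middle_informative as [[j [Hj _]]|]; auto.
  rewrite prefix_cat_nil in Hj. simpl in Hj. lia.
  intros i _. unfold per. apply erase_comp. apply Nat.mod_upper_bound. lia.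
Qed.

Local Open Scope R_scope.

Lemma f_orbit v : (forall n, inf_true (Nat.iter n (sigma_inf k s) v)) ->
  forall n, Nat.iter n (f_sigma k s weps) (bin_val v) = bin_val (Nat.iter n (sigma_inf k s) v).
Proof.
  intros Hg n. induction n; [reflexivity|].
  simpl. rewrite IHn. set (w := Nat.iter n (sigma_inf k s) v).
  assert (Ht : tilde (bin_val w) = w) by (apply tilde_bin_val, Hg).
  unfold f_sigma. destruct excluded_middle_informative as [H|H].
  - rewrite Ht. reflexivity.
  - exfalso. apply H. split.
    + destruct (Hg n 0%nat) as [p [_ Hp]]. split; [apply (bin_val_pos _ p Hp)|apply bin_val_bounds].
    + rewrite Ht. intros E. destruct (Hg (S n) 0%nat) as [p [_ Hp]].
      simpl in Hp. fold w in Hp. rewrite E, per_sigma in Hp. discriminate.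
Qed.

Definition X g := bin_val (V g).

Lemma X_orbit g n : Nat.iter n (f_sigma k s weps) (X g) = bin_val (Nat.iter n (sigma_inf k s) (V g)).
Proof. apply f_orbit. intros m N. apply good. Qed.

Lemma sep_gap g g' m : g (nu m) <> g' (nu m) ->
  1/2 <= Rabs (Nat.iter (T (2 * m)) (f_sigma k s weps) (X g) - Nat.iter (T (2 * m)) (f_sigma k s weps) (X g')).
Proof.
  intros Hd. rewrite !X_orbit.
  destruct (sep_prefix g m) as [A1 A2]. destruct (sep_prefix g' m) as [B1 B2].
  assert (Hq : (/2) ^ 2 = 1/4) by (simpl; field).
  destruct (g (nu m)) eqn:E1; destruct (g' (nu m)) eqn:E2; try congruence.
  - destruct (A2 eq_refl) as [a0 a1]. destruct (B1 eq_refl) as [b0 b1].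
    pose proof (bin_val_big _ a0 a1).
    pose proof (bin_val_small (Nat.iter (T (2 * m)) (sigma_inf k s) (V g')) 2).
    assert (bin_val (Nat.iter (T (2 * m)) (sigma_inf k s) (V g')) <= 1/4).
    { rewrite <- Hq. apply H0. intros i Hi. destruct i as [|[|i]]; auto; lia. }
    rewrite Rabs_pos_eq; lra.
  - destruct (A1 eq_refl) as [a0 a1]. destruct (B2 eq_refl) as [b0 b1].
    pose proof (bin_val_big _ b0 b1).
    pose proof (bin_val_small (Nat.iter (T (2 * m)) (sigma_inf k s) (V g)) 2).
    assert (bin_val (Nat.iter (T (2 * m)) (sigma_inf k s) (V g)) <= 1/4).
    { rewrite <- Hq. apply H0. intros i Hi. destruct i as [|[|i]]; auto; lia. }
    rewrite Rabs_minus_sym, Rabs_pos_eq; lra.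
Qed.

Lemma agr_small g g' m :
  Rabs (Nat.iter (T (S (2 * m))) (f_sigma k s weps) (X g) - Nat.iter (T (S (2 * m))) (f_sigma k s weps) (X g'))
  <= (/2) ^ (S m).
Proof.
  rewrite !X_orbit.
  pose proof (bin_val_small _ (S m) (agr_prefix g m)).
  pose proof (bin_val_small _ (S m) (agr_prefix g' m)).
  pose proof (bin_val_bounds (Nat.iter (T (S (2 * m))) (sigma_inf k s) (V g))).
  pose proof (bin_val_bounds (Nat.iter (T (S (2 * m))) (sigma_inf k s) (V g'))).
  apply Rabs_le. lra.
Qed.

Lemma X_inj g g' : g <> g' -> X g <> X g'.
Proof.
  intros Hne E. assert (Hex : exists i, g i <> g' i).
  { apply not_all_ex_not. intros H. apply Hne. apply functional_extensionality. exact H. }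
  destruct Hex as [i Hi]. destruct (nu_inf i 0) as [m [_ Hm]].
  pose proof (sep_gap g g' m) as H. rewrite Hm in H. specialize (H Hi).
  rewrite E, Rminus_diag, Rabs_R0 in H. lra.
Qed.

Lemma main_sec : exists S : R -> Prop,
    (forall x, S x -> 0 <= x <= 1) /\
    uncountable S /\
    (forall x y, S x -> S y -> x <> y ->
       LimInf_seq (fun n => Rabs (Nat.iter n (f_sigma k s weps) x
                                  - Nat.iter n (f_sigma k s weps) y)) = Finite 0 /\
       Rbar_lt (Finite 0)
         (LimSup_seq (fun n => Rabs (Nat.iter n (f_sigma k s weps) x
                                     - Nat.iter n (f_sigma k s weps) y)))).
Proof.
  exists (fun x => exists g, x = X g). split; [|split].
  - intros x [g ->]. apply bin_val_bounds.
  - intros [f Hf].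
    set (G := fun n => epsilon (inhabits (fun _ : nat => false)) (fun g => f n = X g)).
    set (d := fun n => negb (G n n)).
    destruct (Hf (X d) (ex_intro _ d eq_refl)) as [n Hn].
    assert (HG : f n = X (G n)).
    { apply (epsilon_spec (inhabits (fun _ : nat => false)) (fun g => f n = X g)). eauto. }
    assert (E : G n = d).
    { destruct (classic (G n = d)) as [h|h]; auto. exfalso. apply (X_inj _ _ h). congruence. }
    assert (G n n = d n) by (rewrite E; auto). unfold d in H. destruct (G n n); discriminate.
  - intros x y [g ->] [g' ->] Hxy.
    assert (Hgg : g <> g') by (intros ->; auto).
    assert (Hex : exists i, g i <> g' i).
    { apply not_all_ex_not. intros H. apply Hgg. apply functional_extensionality. exact H. }
    destruct Hex as [i Hi].
    set (u := fun n => Rabs (Nat.iter n (f_sigma k s weps) (X g) - Nat.iter n (f_sigma k s weps) (X g'))).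
    split.
    + apply is_LimInf_seq_unique. simpl. intros eps. split.
      * intros N. destruct (pow_lt_1_zero (/2) ltac:(rewrite Rabs_pos_eq; lra) eps (cond_pos eps)) as [N0 HN0].
        exists (T (S (2 * (Nat.max N N0)))). split.
        -- pose proof (T_ge (S (2 * Nat.max N N0))). lia.
        -- pose proof (agr_small g g' (Nat.max N N0)).
           specialize (HN0 (S (Nat.max N N0)) ltac:(lia)). rewrite Rabs_pos_eq in HN0 by (apply pow_le; lra).
           unfold u. lra.
      * exists 0%nat. intros n _. unfold u. pose proof (Rabs_pos (Nat.iter n (f_sigma k s weps) (X g) - Nat.iter n (f_sigma k s weps) (X g'))).
        pose proof (cond_pos eps). lra.
    + fold u. destruct (ex_LimSup_seq u) as [l Hl]. rewrite (is_LimSup_seq_unique _ _ Hl).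
      destruct l as [l| |]; simpl in *; auto.
      * destruct (Hl (mkposreal (1/4) ltac:(lra))) as [_ [N HN]]. simpl in HN.
        destruct (nu_inf i N) as [m [Hm Hnu]].
        pose proof (sep_gap g g' m) as Hs. rewrite Hnu in Hs. specialize (Hs Hi).
        specialize (HN (T (2 * m)) ltac:(pose proof (T_ge (2 * m)); lia)). unfold u in HN. lra.
      * destruct (Hl 0) as [N HN]. specialize (HN N (le_n N)). unfold u in HN.
        pose proof (Rabs_pos (Nat.iter N (f_sigma k s weps) (X g) - Nat.iter N (f_sigma k s weps) (X g'))). lra.
Qed.

End Words.

Open Scope R_scope.

Theorem mainTheorem17 (k : nat) (s : nat -> bool -> list bool)
  (weps : list bool) :
  (2 <= k)%nat ->
  erasing_block k s weps ->
  completely_erasing k s ->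
  weps <> repeat true k ->
  optimal k s ->
  exists S : R -> Prop,
    (forall x, S x -> 0 <= x <= 1) /\
    uncountable S /\
    (forall x y, S x -> S y -> x <> y ->
       LimInf_seq (fun n => Rabs (Nat.iter n (f_sigma k s weps) x
                                  - Nat.iter n (f_sigma k s weps) y)) = Finite 0 /\
       Rbar_lt (Finite 0)
         (LimSup_seq (fun n => Rabs (Nat.iter n (f_sigma k s weps) x
                                     - Nat.iter n (f_sigma k s weps) y)))).
Proof.
  intros Hk [Hwl [Hwe _]] Hce _ Hopt.
  eapply main_sec; eauto.
Qed.
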